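(* Let $U=(E,\mathcal{D},\rho)$ be a U-matroid. If $A\in\mathcal{D}$ and $\rho(A)=|A|=\rho(E)$, then $A$ is a basis of $U$.
   Context: A U-matroid is a triple $(E,\mathcal{D},\rho)$ with $E$ finite, $\mathcal{D}\subseteq 2^E$ an accessible distributive lattice of sets, and $\rho:\mathcal{D}\to\mathbb{N}$ with $\rho(\emptyset)=0$, monotone, submodular, with unit increase. A basis of $U$ is the support of a vertex of the base polyhedron $\{\mathbf{x}\in\mathbb{R}^E:\mathbf{x}(A)\le\rho(A)\ \forall A\in\mathcal{D},\ \mathbf{x}(E)=\rho(E)\}$. *)

(* Defs.v *)
From HB Require Import structures.
From mathcomp Require Import all_boot all_order all_algebra.
From mathcomp Require Import reals.
Set Implicit Arguments. Unset Strict Implicit. Unset Printing Implicit Defensive.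
Import Order.TTheory GRing.Theory Num.Theory.

(* A U-matroid (E, D, rho): E is the finite type, D a family of subsets of E,
   rho : {set E} -> nat, of which only the values on D matter. *)

Definition set_lattice (E : finType) (D : {set {set E}}) : Prop :=
  [/\ set0 \in D, [set: E] \in D,
      (forall A B, A \in D -> B \in D -> A :|: B \in D) &
      (forall A B, A \in D -> B \in D -> A :&: B \in D)].

Definition accessible (E : finType) (D : {set {set E}}) : Prop :=
  forall A, A \in D -> A != set0 -> exists2 a, a \in A & A :\ a \in D.

Definition is_Umatroid (E : finType) (D : {set {set E}}) (rho : {set E} -> nat)
  : Prop :=
  [/\ set_lattice D /\ accessible D,
      rho set0 = 0%N,
      (forall A B, A \in D -> B \in D -> A \subset B -> (rho A <= rho B)%N),
      (forall A B, A \in D -> B \in D ->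
         (rho (A :|: B) + rho (A :&: B) <= rho A + rho B)%N) &
      (forall A B, A \in D -> B \in D -> A \subset B -> #|B :\: A| = 1%N ->
         (rho B <= (rho A).+1)%N)].

Local Open Scope ring_scope.

Definition xsum (R : realType) (E : finType) (x : E -> R) (A : {set E}) : R :=
  \sum_(e in A) x e.

Definition base_polyhedron (R : realType) (E : finType) (D : {set {set E}})
  (rho : {set E} -> nat) (x : E -> R) : Prop :=
  (forall A, A \in D -> xsum x A <= (rho A)%:R) /\ xsum x [set: E] = (rho [set: E])%:R.

Definition is_vertex (R : realType) (E : finType) (P : (E -> R) -> Prop)
  (x : E -> R) : Prop :=
  P x /\ forall y z t, P y -> P z -> 0 < t -> t < 1 ->
      (forall e, x e = t * y e + (1 - t) * z e) -> (forall e, y e = z e).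

Definition support (R : realType) (E : finType) (x : E -> R) : {set E} :=
  [set e | x e != 0].

Definition is_basis (R : realType) (E : finType) (D : {set {set E}})
  (rho : {set E} -> nat) (B : {set E}) : Prop :=
  exists x : E -> R, is_vertex (base_polyhedron D rho) x /\ support x = B.

(* Main.v *)
Require Import Defs.
From HB Require Import structures.
From mathcomp Require Import all_boot all_order all_algebra.
From mathcomp Require Import reals.
From mathcomp Require Import lra.
Set Implicit Arguments. Unset Strict Implicit. Unset Printing Implicit Defensive.
Import Order.TTheory GRing.Theory Num.Theory.

Section S.
Variables (E : finType) (D : {set {set E}}) (rho : {set E} -> nat).
Hypothesis HU : is_Umatroid D rho.

Lemma rank_bound : forall n (B C : {set E}), #|B| = n -> B \in D -> C \in D ->
  (rho (C :|: B) <= rho C + #|B :\: C|)%N.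
Proof.
case: HU => [[[D0 DT DU DI] Dacc] r0 mono sub uinc].
elim=> [|n IH] B C hn BD CD.
  move/eqP: hn; rewrite cards_eq0 => /eqP ->; by rewrite setU0 leq_addr.
have Bn0 : B != set0 by rewrite -card_gt0 hn.
have [b bB BbD] := Dacc B BD Bn0.
have hn' : #|B :\ b| = n by rewrite (cardsD1 b B) bB in hn; case: hn.
have IHb := IH _ C hn' BbD CD.
case bC: (b \in C).
  have -> : C :|: B = C :|: (B :\ b).
    apply/setP=> e; rewrite !inE; case: (eqVneq e b) => [->|]; by rewrite ?bC ?bB ?orbT.
  have -> : B :\: C = (B :\ b) :\: C.
    apply/setP=> e; rewrite !inE; case: (eqVneq e b) => [->|]; by rewrite ?bC.
  exact: IHb.
have e1 : C :|: B = b |: (C :|: (B :\ b)).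
  apply/setP=> e; rewrite !inE; case: (eqVneq e b) => [->|]; by rewrite ?bC ?bB ?orbT.
have e2 : #|B :\: C| = (#|(B :\ b) :\: C|).+1.
  rewrite (cardsD1 b (B :\: C)) !inE bC bB /=; congr (_.+1); apply: eq_card => e.
  rewrite !inE; by rewrite andbCA.
have UD : C :|: (B :\ b) \in D by apply: DU.
have := uinc (C :|: (B :\ b)) (C :|: B) UD (DU _ _ CD BD).
rewrite e1 subsetUr => /(_ isT).
have -> : (b |: (C :|: B :\ b)) :\: (C :|: B :\ b) = [set b].
  apply/setP=> e; rewrite !inE; case: (eqVneq e b) => [->|neb]; first by rewrite bC. by case: (e \in C); case: (e \in B).  
rewrite cards1 => /(_ erefl) h.
rewrite e2 addnS; apply: leq_trans h _; by rewrite ltnS.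
Qed.

Lemma rho_le_card C : C \in D -> (rho C <= #|C|)%N.
Proof.
case: (HU) => [[[D0 _ _ _] _] r0 _ _ _] CD.
have := rank_bound erefl CD D0; by rewrite set0U r0 setD0.
Qed.

Lemma rho_sub_A A C : A \in D -> rho A = #|A| -> C \in D -> C \subset A -> rho C = #|C|.
Proof.
move=> AD rA CD CA; apply/eqP; rewrite eqn_leq rho_le_card //=.
have := rank_bound erefl AD CD; rewrite (setUidPr CA) rA.
rewrite (cardsD A C) (setIidPr CA) => h.
have hc : (#|C| <= #|A|)%N by apply: subset_leq_card.
rewrite -(leq_add2r (#|A| - #|C|)) subnKC //.
Qed.

Lemma elem_step e : [set: E] \in D -> exists C, [/\ C \in D, e \in C & C :\ e \in D].
Proof.
case: HU => [[_ Dacc] _ _ _ _] TD.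
suff: forall n (C : {set E}), #|C| = n -> C \in D -> e \in C -> exists C, [/\ C \in D, e \in C & C :\ e \in D].
  by move/(_ _ _ erefl TD); rewrite inE => /(_ isT).
elim=> [|n IH] C hn CD eC.
  by move/eqP: hn; rewrite cards_eq0 => /eqP h; rewrite h inE in eC.
have Cn0 : C != set0 by apply/set0Pn; exists e.
have [a aC CaD] := Dacc C CD Cn0.
case: (eqVneq a e) => [<-|ae]; first by exists C.
apply: (IH (C :\ a)) => //; first by rewrite (cardsD1 a C) aC in hn; case: hn.
by rewrite !inE eq_sym ae.
Qed.

End S.

Local Open Scope ring_scope.

Theorem corollary3p7 (R : realType) (E : finType) (D : {set {set E}})
  (rho : {set E} -> nat) (A : {set E}) :
  is_Umatroid D rho -> A \in D ->
  rho A = #|A| -> #|A| = rho [set: E] ->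
  is_basis R D rho A.
Proof.
move=> HU AD rA rAE.
case: (HU) => [[[D0 DT DU DI] Dacc] r0 mono sub uinc].
pose x : E -> R := fun e => ((e \in A) : nat)%:R.
have xs B : xsum x B = #|A :&: B|%:R.
  rewrite /xsum /x -natr_sum -big_mkcondr /= sum1_card; congr (_%:R).
  by apply: eq_card => e; rewrite !inE andbC.
have inP : base_polyhedron D rho x.
  split.
    move=> B BD; rewrite xs ler_nat.
    rewrite -(rho_sub_A HU AD rA (DI _ _ AD BD) (subsetIl _ _)).
    by apply: mono => //; [apply: DI | apply: subsetIr].
  by rewrite xs setIT rAE.
exists x; split; last first.
  apply/setP=> e; rewrite inE /x; case: (e \in A) => /=; by rewrite ?oner_eq0 ?eqxx.
split=> // y z t Py Pz t0 t1 hx.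
have tight B : B \in D -> xsum x B = (rho B)%:R -> xsum y B = xsum x B.
  move=> BD hB.
  have hs : xsum x B = t * xsum y B + (1 - t) * xsum z B.
    rewrite /xsum (eq_bigr _ (fun e _ => hx e)) big_split /= -!mulr_sumr //.
  have hy := Py.1 B BD; have hz := Pz.1 B BD.
  rewrite -hB in hy hz.
  nra.
have yx e : y e = x e.
  have [C [CD eC CeD]] := elem_step HU e DT.
  have key : forall B, B \in D -> B :\ e \in D -> e \in B ->
      xsum x B = (rho B)%:R -> xsum x (B :\ e) = (rho (B :\ e))%:R -> y e = x e.
    move=> B BD BeD eB h1 h2.
    have hy := tight _ BD h1; have hy' := tight _ BeD h2.
    move: hy hy'; rewrite /xsum (bigD1 e eB) /= (bigD1 e eB) /=.
    have -> : \sum_(i in B | i != e) y i = \sum_(i in B :\ e) y i.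
      by apply: eq_bigl => i; rewrite !inE andbC.
    have -> : \sum_(i in B | i != e) x i = \sum_(i in B :\ e) x i.
      by apply: eq_bigl => i; rewrite !inE andbC.
    move=> ? ?; lra.
  case eA: (e \in A).
    have BD : A :&: C \in D by apply: DI.
    have BeD : (A :&: C) :\ e \in D.
      have -> : (A :&: C) :\ e = A :&: (C :\ e) by rewrite setIDA.
      by apply: DI.
    have tA B' : B' \in D -> B' \subset A -> xsum x B' = (rho B')%:R.
      by move=> B'D sB; rewrite xs (setIidPr sB) (rho_sub_A HU AD rA B'D sB).
    apply: (key _ BD BeD); first by rewrite inE eA eC.
      by apply: tA => //; apply: subsetIl.
    apply: tA => //; apply: subset_trans (subsetIl _ _); apply: subsetDl.
  have BD : A :|: C \in D by apply: DU.
  have eq1 : (A :|: C) :\ e = A :|: (C :\ e).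
    apply/setP=> f; rewrite !inE; case: (eqVneq f e) => [->|]; by rewrite ?eA.
  have BeD : (A :|: C) :\ e \in D by rewrite eq1; apply: DU.
  have tU B' : B' \in D -> A \subset B' -> xsum x B' = (rho B')%:R.
    move=> B'D sB; rewrite xs (setIidPl sB); congr (_%:R); apply/eqP; rewrite eqn_leq.
    rewrite -{1}rA (mono _ _ AD B'D sB) /= rAE; apply: mono => //; apply: subsetT.
  apply: (key _ BD BeD); first by rewrite inE eC orbT.
    by apply: tU => //; apply: subsetUl.
  by apply: tU => //; rewrite eq1 subsetUl.
move=> e; rewrite yx; have := hx e; rewrite yx => h.
have : (1 - t) * (z e - x e) = 0 by rewrite mulrBr; lra.
move/eqP; rewrite mulf_eq0 !subr_eq0 => /orP [/eqP h1|/eqP h2]; [by rewrite -h1 ltxx in t1 | by rewrite h2].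
Qed.
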